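(* Let $\rho:F_2=\langle a,b\rangle\to PSL(2,\mathbb{C})$ be an irreducible representation with principal character $(\gamma,0,-4)$ (so $\rho(a)$ is parabolic and $\rho(b)$ is elliptic of order two), and let $w$ be a good word. Then $(p_w(\gamma),0,-4)$ is the principal character of a representation $\rho_w:F_2\to PSL(2,\mathbb{C})$, and $\rho_w$ is discrete (i.e. $\rho_w(F_2)$ is a discrete subgroup) if $\rho$ is.
   Context: For $\rho:F_2\to PSL(2,\mathbb{C})$ the principal character is $(\operatorname{tr}[\rho(a),\rho(b)]-2,\ \operatorname{tr}^2\rho(a)-4,\ \operatorname{tr}^2\rho(b)-4)$. For $x,y\in PSL(2,\mathbb{C})$ write $\gamma(x,y)=\operatorname{tr}[x,y]-2$. A good word is a reduced word $w=a^{m_1}ba^{m_2}b\cdots ba^{m_n}$ in the group $\langle a,b\mid b^2=1\rangle\cong\mathbb{Z}*\mathbb{Z}_2$ with $n\ge 3$ (at least two occurrences of $b$) and $m_i\neq0$ for $2\le i\le n-1$. For a good word $w$, $p_w\in\mathbb{Z}[z]$ denotes the word polynomial: the unique (monic, integer) polynomial such that for every parabolic $f\in PSL(2,\mathbb{C})$ and every elliptic $\phi\in PSL(2,\mathbb{C})$ of order two, $\gamma(f,w(f,\phi))=p_w(\gamma(f,\phi))$, where $w(f,\phi)$ is obtained by substituting $a=f$, $b=\phi$. *)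

(* Defs.v *)
From HB Require Import structures.
From mathcomp Require Import all_boot all_order all_algebra.
From mathcomp Require Import reals complex.
Set Implicit Arguments. Unset Strict Implicit. Unset Printing Implicit Defensive.
Import Order.TTheory GRing.Theory Num.Theory.
Local Open Scope ring_scope.
Local Open Scope complex_scope.

Section Defs.
Variable R : realType.
Notation C := (R[i]).
Notation M := ('M[C]_2).

(* elements of SL(2,C); elements of PSL(2,C) are represented by their lifts *)
Definition inSL (x : M) : Prop := \det x = 1.

Definition gammaC (x y : M) : C := \tr (x * y * x^-1 * y^-1) - 2.
Definition betaC (x : M) : C := (\tr x) ^+ 2 - 4.

Definition principal_character (A B : M) : C * C * C :=
  (gammaC A B, betaC A, betaC B).

(* a representation F_2 -> PSL(2,C), given by (lifts of) the images of a, b *)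
Definition is_rep (A B : M) : Prop := inSL A /\ inSL B.

Definition parabolic (f : M) : Prop :=
  inSL f /\ (\tr f) ^+ 2 = 4 /\ f <> 1 /\ f <> - 1.
Definition elliptic2 (phi : M) : Prop := inSL phi /\ \tr phi = 0.

Definition irreducible_rep (A B : M) : Prop :=
  ~ exists (v : 'cV[C]_2) (l m : C),
      v != 0 /\ A *m v = l *: v /\ B *m v = m *: v.

Inductive gen2 (A B : M) : M -> Prop :=
  | gen2_1 : gen2 A B 1
  | gen2_A : gen2 A B A
  | gen2_B : gen2 A B B
  | gen2_inv x : gen2 A B x -> gen2 A B x^-1
  | gen2_mul x y : gen2 A B x -> gen2 A B y -> gen2 A B (x * y).

Definition near (x y : M) (e : C) : Prop := forall i j, `|x i j - y i j| < e.

(* the image of the representation in PSL(2,C) is discrete: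
   the identity of PSL(2,C) is isolated in it *)
Definition discrete_rep (A B : M) : Prop :=
  exists e : C, 0 < e /\
    forall g, gen2 A B g -> g <> 1 -> g <> - 1 ->
      ~ near g 1 e /\ ~ near g (- 1) e.

(* words a^{m_1} b a^{m_2} b ... b a^{m_n} in <a,b | b^2 = 1>,
   encoded by the exponent list [:: m_1; ...; m_n] *)
Fixpoint word_eval (f phi : M) (ms : seq int) : M :=
  match ms with
  | [::] => 1
  | [:: m] => f ^ m
  | m :: ms' => f ^ m * phi * word_eval f phi ms'
  end.

Definition good_word (ms : seq int) : Prop :=
  (3 <= size ms)%N /\
  forall i, (0 < i)%N -> (i < (size ms).-1)%N -> nth 0 ms i <> 0.

Definition peval (p : {poly int}) (x : C) : C :=
  (map_poly (fun z : int => z%:~R) p).[x].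

Definition word_poly (ms : seq int) (p : {poly int}) : Prop :=
  p \is monic /\
  forall f phi, parabolic f -> elliptic2 phi ->
    gammaC f (word_eval f phi ms) = peval p (gammaC f phi).

End Defs.

(* Main.v *)
Require Import Defs.
From HB Require Import structures.
From mathcomp Require Import all_boot all_order all_algebra.
From mathcomp Require Import reals complex.
From mathcomp Require Import ring lra.
From Stdlib Require Import Classical_Prop.
Set Implicit Arguments. Unset Strict Implicit. Unset Printing Implicit Defensive.
Import Order.TTheory GRing.Theory Num.Theory.
Import ComplexField.Normc.
Local Open Scope ring_scope.
Local Open Scope complex_scope.



Definition mk {R : realType} (a b c d : R[i]) : 'M[R[i]]_2 := \matrix_(i, j)
  if i == 0 then (if j == 0 then a else b) else (if j == 0 then c else d).

Lemma ord2P (i : 'I_2) : i = 0 \/ i = 1.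
Proof. case: i => [[|[|]]] //= H; [left|right]; exact: val_inj. Qed.

Lemma mkE {R : realType} (X : 'M[R[i]]_2) : X = mk (X 0 0) (X 0 1) (X 1 0) (X 1 1).
Proof.
apply/matrixP => i j; rewrite mxE.
by case: (ord2P i) => ->; case: (ord2P j) => ->.
Qed.

Lemma mk00 {R : realType} (a b c d : R[i]) : mk a b c d 0 0 = a. Proof. by rewrite mxE. Qed.
Lemma mk01 {R : realType} (a b c d : R[i]) : mk a b c d 0 1 = b. Proof. by rewrite mxE. Qed.
Lemma mk10 {R : realType} (a b c d : R[i]) : mk a b c d 1 0 = c. Proof. by rewrite mxE. Qed.
Lemma mk11 {R : realType} (a b c d : R[i]) : mk a b c d 1 1 = d. Proof. by rewrite mxE. Qed.

Lemma mk_mul {R : realType} (a b c d a' b' c' d' : R[i]) :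
  mk a b c d * mk a' b' c' d' =
  mk (a * a' + b * c') (a * b' + b * d') (c * a' + d * c') (c * b' + d * d').
Proof.
apply/matrixP => i j; rewrite -mulmxE !mxE !big_ord_recl big_ord0 !mxE /=.
by case: (ord2P i) => ->; case: (ord2P j) => -> /=; rewrite addr0.
Qed.

Lemma mk_add {R : realType} (a b c d a' b' c' d' : R[i]) :
  mk a b c d + mk a' b' c' d' = mk (a + a') (b + b') (c + c') (d + d').
Proof.
apply/matrixP => i j; rewrite !mxE.
by case: (ord2P i) => ->; case: (ord2P j) => ->.
Qed.

Lemma mk_opp {R : realType} (a b c d : R[i]) : - mk a b c d = mk (- a) (- b) (- c) (- d).
Proof.
apply/matrixP => i j; rewrite !mxE.
by case: (ord2P i) => ->; case: (ord2P j) => ->.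
Qed.

Lemma mk1 {R : realType} : (1 : 'M[R[i]]_2) = mk 1 0 0 1.
Proof.
apply/matrixP => i j; rewrite !mxE.
by case: (ord2P i) => ->; case: (ord2P j) => ->.
Qed.

Lemma mkN1 {R : realType} : (-1 : 'M[R[i]]_2) = mk (-1) 0 0 (-1).
Proof. by rewrite mk1 mk_opp oppr0. Qed.

Lemma mk_det {R : realType} (a b c d : R[i]) : \det (mk a b c d) = a * d - b * c.
Proof.
rewrite (expand_det_row _ 0) !big_ord_recl big_ord0 /cofactor !det_mx11 !mxE /=.
rewrite !expr0 expr1 /=. ring.
Qed.

Lemma mk_tr {R : realType} (a b c d : R[i]) : \tr (mk a b c d) = a + d.
Proof. by rewrite /mxtrace !big_ord_recl big_ord0 !mxE /= addr0. Qed.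

Lemma mk_eq {R : realType} (a b c d a' b' c' d' : R[i]) :
  a = a' -> b = b' -> c = c' -> d = d' -> mk a b c d = mk a' b' c' d'.
Proof. by move=> -> -> -> ->. Qed.

Lemma unit_det1 {R : realType} (X : 'M[R[i]]_2) : \det X = 1 -> X \is a GRing.unit.
Proof. move=> h. have: X \in unitmx by rewrite unitmxE h unitr1. by []. Qed.

Lemma inv_eqM {R : realType} (X Y : 'M[R[i]]_2) : X * Y = 1 -> Y * X = 1 -> X^-1 = Y.
Proof.
move=> h1 h2.
have uX : X \is a GRing.unit by apply/unitrP; exists Y.
by rewrite -[LHS]mulr1 -h1 mulrA mulVr // mul1r.
Qed.

Lemma mk_inv {R : realType} (a b c d : R[i]) : a * d - b * c = 1 ->
  (mk a b c d)^-1 = mk d (- b) (- c) a.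
Proof.
move=> h; apply: inv_eqM; rewrite mk_mul mk1; apply: mk_eq;
  try rewrite -h; ring.
Qed.



Lemma lin1 {R : realType} (k E F G H : R[i]) :
  E - F = k * (G - H) -> G = H -> E = F.
Proof. by move=> h e; apply/eqP; rewrite -subr_eq0 h e subrr mulr0. Qed.

Lemma lin2 {R : realType} (k1 k2 E F G1 H1 G2 H2 : R[i]) :
  E - F = k1 * (G1 - H1) + k2 * (G2 - H2) -> G1 = H1 -> G2 = H2 -> E = F.
Proof. by move=> h e1 e2; apply/eqP; rewrite -subr_eq0 h e1 e2 !subrr !mulr0 addr0. Qed.

Definition Um {R : realType} : 'M[R[i]]_2 := mk 1 1 0 1.

Lemma gammaC_U {R : realType} (p q r s : R[i]) : p * s - q * r = 1 ->
  gammaC Um (mk p q r s) = r ^+ 2.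
Proof.
move=> h; rewrite /gammaC /Um mk_inv; last by ring.
rewrite mk_inv // !mk_mul mk_tr.
apply: (lin1 (k := 2) _ h); ring.
Qed.

Lemma sq_tr0 {R : realType} (Y : 'M[R[i]]_2) : \det Y = 1 -> \tr Y = 0 -> Y * Y = -1.
Proof.
rewrite [Y]mkE mk_det mk_tr => h1 h2; rewrite mk_mul mkN1.
have hd : Y 1 1 = - Y 0 0 by apply: (lin1 (k := 1) _ h2); ring.
move: h1; rewrite hd => h1.
apply: mk_eq.
- apply: (lin1 (k := -1) _ h1); ring.
- ring.
- ring.
- apply: (lin1 (k := -1) _ h1); ring.
Qed.

Lemma tr_conj {R : realType} (P Z : 'M[R[i]]_2) : P \is a GRing.unit ->
  \tr (P^-1 * Z * P) = \tr Z.
Proof.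
move=> uP; rewrite -!mulmxE mxtrace_mulC !mulmxE mulrA mulrV // mul1r //.
Qed.

Lemma inv_conj {R : realType} (P X : 'M[R[i]]_2) : P \is a GRing.unit ->
  X \is a GRing.unit -> (P^-1 * X * P)^-1 = P^-1 * X^-1 * P.
Proof.
move=> uP uX.
have u1 : P^-1 * X \is a GRing.unit by rewrite unitrMl // unitrV.
rewrite invrM // invrM ?unitrV // invrK mulrA //.
Qed.

Lemma gammaC_conj {R : realType} (P X Y : 'M[R[i]]_2) : P \is a GRing.unit ->
  X \is a GRing.unit -> Y \is a GRing.unit ->
  gammaC (P^-1 * X * P) (P^-1 * Y * P) = gammaC X Y.
Proof.
move=> uP uX uY; rewrite /gammaC !inv_conj //.
congr (_ - _); rewrite -(tr_conj (X * Y * X^-1 * Y^-1) uP); congr (\tr _).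
rewrite !mulrA !mulrK //.
Qed.

Lemma gammaC_oppl {R : realType} (X Y : 'M[R[i]]_2) : gammaC (- X) Y = gammaC X Y.
Proof. by rewrite /gammaC invrN !(mulrN, mulNr) opprK. Qed.

Lemma gammaC_oppr {R : realType} (X Y : 'M[R[i]]_2) : gammaC X (- Y) = gammaC X Y.
Proof. by rewrite /gammaC invrN !(mulrN, mulNr) opprK. Qed.

Lemma betaC_opp {R : realType} (X : 'M[R[i]]_2) : betaC (- X) = betaC X.
Proof. by rewrite /betaC raddfN sqrrN. Qed.



Lemma nge0 {R : realType} (x : R[i]) : 0 <= normc x.
Proof. case: x => a b; exact: sqrtr_ge0. Qed.

Definition nearR {R : realType} (X Y : 'M[R[i]]_2) (r : R) :=
  forall i j, normc (X i j - Y i j) < r.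

Definition bnd {R : realType} (X : 'M[R[i]]_2) (r : R) :=
  forall i j, normc (X i j) <= r.

Lemma near_nearR {R : realType} (X Y : 'M[R[i]]_2) (r : R) :
  near X Y (r%:C) <-> nearR X Y r.
Proof.
split => h i j; have := h i j.
- by rewrite [`|_|]/= ltcR.
- by move=> h'; rewrite [`|_|]/= ltcR.
Qed.

Lemma pos_real {R : realType} (e : R[i]) : 0 < e -> exists r, 0 < r /\ e = r%:C.
Proof.
case: e => a b; rewrite ltcE /= => /andP [/eqP hb ha].
by exists a; split => //; rewrite hb.
Qed.

Definition isol {R : realType} (G : 'M[R[i]]_2 -> Prop) (r : R) :=
  forall g, G g -> g <> 1 -> g <> -1 -> ~ nearR g 1 r /\ ~ nearR g (-1) r.

Lemma disc_isol {R : realType} (A B : 'M[R[i]]_2) :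
  discrete_rep A B <-> exists r : R, 0 < r /\ isol (gen2 A B) r.
Proof.
split.
- move=> [e [he H]]; have [r [hr er]] := pos_real he; subst e.
  exists r; split => // g hg h1 h2; have [n1 n2] := H g hg h1 h2.
  by split => /near_nearR.
- move=> [r [hr H]]; exists r%:C; split; first by rewrite ltcR.
  move=> g hg h1 h2; have [n1 n2] := H g hg h1 h2.
  by split => /near_nearR.
Qed.

Lemma nearR_bnd {R : realType} (X Y : 'M[R[i]]_2) r : nearR X Y r -> bnd (X - Y) r.
Proof. by move=> h i j; rewrite !mxE; apply/ltW/h. Qed.

Lemma bnd_nearR {R : realType} (X Y : 'M[R[i]]_2) r r' : bnd (X - Y) r -> r < r' -> nearR X Y r'.
Proof. by move=> h hr i j; have := h i j; rewrite !mxE => h'; apply: le_lt_trans h' hr. Qed.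

Lemma bnd_mul {R : realType} (X Y : 'M[R[i]]_2) a b : bnd X a -> bnd Y b ->
  bnd (X * Y) (2 * a * b).
Proof.
move=> hX hY i j; rewrite -mulmxE !mxE !big_ord_recl big_ord0 addr0 /=.
apply: le_trans (le_normcD _ _) _; rewrite !normcM.
have h1 := hX i 0; have h2 := hX i (lift 0 0); have h3 := hY 0 j;
have h4 := hY (lift 0 0) j.
have := nge0 (X i 0); have := nge0 (X i (lift 0 0)); have := nge0 (Y 0 j);
have := nge0 (Y (lift 0 0) j).
move=> *; nra.
Qed.

Definition mxn {R : realType} (X : 'M[R[i]]_2) : R :=
  normc (X 0 0) + normc (X 0 1) + normc (X 1 0) + normc (X 1 1).

Lemma bnd_mxn {R : realType} (X : 'M[R[i]]_2) : bnd X (mxn X).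
Proof.
move=> i j; rewrite /mxn.
have := nge0 (X 0 0); have := nge0 (X 0 1); have := nge0 (X 1 0); have := nge0 (X 1 1).
case: (ord2P i) => ->; case: (ord2P j) => -> /=. all: move=> *; lra.
Qed.

Lemma mxn_ge0 {R : realType} (X : 'M[R[i]]_2) : 0 <= mxn X.
Proof.
rewrite /mxn.
have := nge0 (X 0 0); have := nge0 (X 0 1); have := nge0 (X 1 0); have := nge0 (X 1 1).
move=> *; lra.
Qed.

Lemma bnd_mono {R : realType} (X : 'M[R[i]]_2) a b : bnd X a -> a <= b -> bnd X b.
Proof. by move=> h hab i j; apply: le_trans (h i j) hab. Qed.

Lemma nearR_opp {R : realType} (X Y : 'M[R[i]]_2) r : nearR (- X) Y r -> nearR X (- Y) r.
Proof.
move=> h i j; have := h i j; rewrite !mxE.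
have -> : X i j - - Y i j = - (- X i j - Y i j) by ring.
by rewrite normcN.
Qed.

Lemma sgn_cases {R : realType} (S : 'M[R[i]]_2) : S = 1 \/ S = -1 -> - S = 1 \/ - S = -1.
Proof. by case=> ->; [right|left; rewrite opprK]. Qed.



Definition sg {R : realType} (b : bool) (X : 'M[R[i]]_2) := if b then - X else X.

Lemma sg_mul {R : realType} b1 b2 (X Y : 'M[R[i]]_2) : sg b1 X * sg b2 Y = sg (b1 (+) b2) (X * Y).
Proof. by case: b1; case: b2; rewrite /sg /= ?mulrN ?mulNr ?opprK. Qed.

Lemma sg_inv {R : realType} b (X : 'M[R[i]]_2) : (sg b X)^-1 = sg b X^-1.
Proof. by case: b; rewrite /sg ?invrN. Qed.

Lemma conj_mul {R : realType} (P X Y : 'M[R[i]]_2) : P \is a GRing.unit ->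
  (P^-1 * X * P) * (P^-1 * Y * P) = P^-1 * (X * Y) * P.
Proof. by move=> uP; rewrite !mulrA mulrK // mulrA. Qed.

Lemma conj1 {R : realType} (P : 'M[R[i]]_2) : P \is a GRing.unit -> P^-1 * 1 * P = 1.
Proof. by move=> uP; rewrite mulr1 mulVr. Qed.

Lemma gen2_unit {R : realType} (A B g : 'M[R[i]]_2) : A \is a GRing.unit ->
  B \is a GRing.unit -> gen2 A B g -> g \is a GRing.unit.
Proof.
move=> uA uB; elim => //; first exact: unitr1.
- by move=> x _ ux; rewrite unitrV.
- by move=> x y _ ux _ uy; rewrite unitrMl.
Qed.

Definition corr {R : realType} (A B A' B' P : 'M[R[i]]_2) :=
  forall g, gen2 A' B' g -> exists g0, gen2 A B g0 /\ exists b, g = sg b (P^-1 * g0 * P).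

Lemma corr_conj {R : realType} (A B P : 'M[R[i]]_2) b1 b2 :
  A \is a GRing.unit -> B \is a GRing.unit -> P \is a GRing.unit ->
  corr A B (sg b1 (P^-1 * A * P)) (sg b2 (P^-1 * B * P)) P.
Proof.
move=> uA uB uP g; elim.
- by exists 1; split; [constructor | exists false; rewrite /sg conj1].
- by exists A; split; [constructor | exists b1].
- by exists B; split; [constructor | exists b2].
- move=> x _ [g0 [hg0 [b ->]]]; exists g0^-1; split; first by constructor.
  exists b; rewrite sg_inv inv_conj //; exact: gen2_unit hg0.
- move=> x y _ [g1 [hg1 [c1 ->]]] _ [g2 [hg2 [c2 ->]]].
  exists (g1 * g2); split; first by constructor.
  by exists (c1 (+) c2); rewrite sg_mul conj_mul.
Qed.

Lemma isol_S {R : realType} (G : 'M[R[i]]_2 -> Prop) r g S : isol G r -> G g ->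
  g <> 1 -> g <> -1 -> (S = 1 \/ S = -1) -> ~ nearR g S r.
Proof. by move=> H hg h1 h2 [] ->; have [] := H g hg h1 h2. Qed.

Lemma conjS {R : realType} (P S : 'M[R[i]]_2) : P \is a GRing.unit -> (S = 1 \/ S = -1) ->
  P * S * P^-1 = S.
Proof. by move=> uP [] ->; rewrite ?mulrN ?mulNr mulr1 mulrV. Qed.

Lemma disc_transfer {R : realType} (A B A' B' P : 'M[R[i]]_2) :
  P \is a GRing.unit -> discrete_rep A B -> corr A B A' B' P -> discrete_rep A' B'.
Proof.
move=> uP /disc_isol [r0 [hr0 H]] hc; apply/disc_isol.
set K := mxn P + mxn P^-1 + 1.
have hK : 1 <= K by have := mxn_ge0 P; have := mxn_ge0 P^-1; rewrite /K; lra.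
have hK2 : 0 < K * K by nra.
exists (r0 / (8 * (K * K))); split.
  by apply: divr_gt0 => //; nra.
have key : forall g S, (S = 1 \/ S = -1) -> nearR g S (r0 / (8 * (K * K))) ->
    nearR (P * g * P^-1) S r0.
  move=> g S hS hn; rewrite -[X in nearR _ X](conjS uP hS).
  apply: (@bnd_nearR _ _ _ (2 * (2 * K * (r0 / (8 * (K * K)))) * K)).
    have -> : P * g * P^-1 - P * S * P^-1 = P * (g - S) * P^-1.
      by rewrite mulrBr mulrBl.
    apply: bnd_mul; last by apply: bnd_mono (bnd_mxn _) _; have := mxn_ge0 P; rewrite /K; lra.
    apply: bnd_mul; first by apply: bnd_mono (bnd_mxn _) _; have := mxn_ge0 P^-1; rewrite /K; lra.
    exact: nearR_bnd.
  have -> : 2 * (2 * K * (r0 / (8 * (K * K)))) * K = r0 / 2.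
    by field; rewrite lt0r_neq0 //; lra.
  lra.
move=> g hg h1 h2.
have [g0 [hg0 [b hgb]]] := hc g hg.
have e : P * g * P^-1 = sg b g0.
  rewrite hgb; case: b {hgb} => /=; rewrite ?mulrN ?mulNr !mulrA mulrV // mul1r mulrK //.
have g01 : g0 <> 1.
  move=> e1; rewrite e1 conj1 // in hgb; case: b e hgb => _ /= hgb; [exact: h2 | exact: h1].
have g02 : g0 <> -1.
  move=> e1; rewrite e1 mulrN mulNr conj1 // in hgb; case: b e hgb => _ /= hgb.
  - by apply: h1; rewrite hgb opprK.
  - exact: h2.
have G : forall S, (S = 1 \/ S = -1) -> ~ nearR g S (r0 / (8 * (K * K))).
  move=> S hS hn; have := key g S hS hn; rewrite e; case: b {e hgb} => /= hn'.
  - apply: (isol_S H hg0 g01 g02 (sgn_cases hS)); exact: nearR_opp.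
  - exact: (isol_S H hg0 g01 g02 hS).
by split; apply: G; [left|right].
Qed.



Lemma unit1M {R : realType} : (1 : 'M[R[i]]_2) \is a GRing.unit.
Proof. exact: unitr1. Qed.

Lemma disc_conj {R : realType} (A B P : 'M[R[i]]_2) b1 b2 :
  A \is a GRing.unit -> B \is a GRing.unit -> P \is a GRing.unit ->
  discrete_rep A B -> discrete_rep (sg b1 (P^-1 * A * P)) (sg b2 (P^-1 * B * P)).
Proof. move=> uA uB uP d; apply: (disc_transfer uP d); exact: corr_conj. Qed.

Lemma disc_sg {R : realType} (A B : 'M[R[i]]_2) b1 b2 :
  A \is a GRing.unit -> B \is a GRing.unit ->
  discrete_rep A B -> discrete_rep (sg b1 A) (sg b2 B).
Proof.
move=> uA uB d; have := disc_conj b1 b2 uA uB unit1M d.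
by rewrite invr1 !mul1r !mulr1.
Qed.

Lemma sg_sg {R : realType} b (X : 'M[R[i]]_2) : sg b (sg b X) = X.
Proof. by case: b; rewrite /sg ?opprK. Qed.

Lemma sg_unit {R : realType} b (X : 'M[R[i]]_2) : X \is a GRing.unit -> sg b X \is a GRing.unit.
Proof. by case: b; rewrite /sg ?unitrN. Qed.

Lemma gen2_sub {R : realType} (A B A' B' : 'M[R[i]]_2) :
  gen2 A B A' -> gen2 A B B' -> forall g, gen2 A' B' g -> gen2 A B g.
Proof. by move=> hA hB g; elim => *; try constructor. Qed.

Lemma disc_sub {R : realType} (A B A' B' : 'M[R[i]]_2) :
  gen2 A B A' -> gen2 A B B' -> discrete_rep A B -> discrete_rep A' B'.
Proof.
move=> hA hB d; apply: (disc_transfer unit1M d) => g hg.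
exists g; split; first exact: gen2_sub hg.
by exists false; rewrite /sg invr1 mul1r mulr1.
Qed.

Definition iC {R : realType} : R[i] := 'i.

Lemma ii {R : realType} : iC * iC = -1 :> R[i].
Proof. by rewrite /iC -expr2 sqr_i. Qed.

Definition Yc {R : realType} (c : R[i]) : 'M[R[i]]_2 := mk iC 0 c (- iC).

Lemma det_Um {R : realType} : \det (@Um R) = 1.
Proof. by rewrite /Um mk_det; ring. Qed.

Lemma det_Yc {R : realType} (c : R[i]) : \det (Yc c) = 1.
Proof. rewrite /Yc mk_det. apply: (lin1 (k := -1) _ ii). ring. Qed.

Lemma tr_Yc {R : realType} (c : R[i]) : \tr (Yc c) = 0.
Proof. by rewrite /Yc mk_tr subrr. Qed.

Lemma tr_Um {R : realType} : \tr (@Um R) = 2.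
Proof. by rewrite /Um mk_tr. Qed.

Lemma conj_eq {R : realType} (Q X Z : 'M[R[i]]_2) : Q \is a GRing.unit ->
  X * Q = Q * Z -> Q^-1 * X * Q = Z.
Proof. by move=> uQ h; rewrite -mulrA h mulrA mulVr // mul1r. Qed.

Lemma unit_det {R : realType} (X : 'M[R[i]]_2) : \det X != 0 -> X \is a GRing.unit.
Proof. move=> h. have: X \in unitmx by rewrite unitmxE unitfE. by []. Qed.

Lemma NF1 {R : realType} (X : 'M[R[i]]_2) : \det X = 1 -> \tr X = 2 -> X <> 1 ->
  exists Q, Q \is a GRing.unit /\ Q^-1 * X * Q = Um.
Proof.
rewrite [X]mkE mk_det mk_tr.
move: (X 0 0) (X 0 1) (X 1 0) (X 1 1) => a b c d hdet htr hX1.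
have hd : d = 2 - a by apply: (lin1 (k := 1) _ htr); ring.
subst d.
have [c0|c0] := eqVneq c 0.
- subst c.
  have ha : a = 1.
    have : (a - 1) ^+ 2 = 0 by apply: (lin1 (k := -1) _ hdet); ring.
    by move/eqP; rewrite expf_eq0 /= subr_eq0 => /eqP.
  subst a.
  have b0 : b != 0.
    by apply/eqP => b0; apply: hX1; rewrite b0 mk1; apply: mk_eq => //; ring.
  exists (mk b 0 0 1); split.
    by apply: unit_det; rewrite mk_det; rewrite mulr1 mulr0 subr0.
  apply: conj_eq; first by apply: unit_det; rewrite mk_det mulr1 mulr0 subr0.
  rewrite /Um !mk_mul; apply: mk_eq; ring.
- have uQ : mk (a - 1) 1 c 0 \is a GRing.unit.
    by apply: unit_det; rewrite mk_det mulr0 mul1r sub0r oppr_eq0.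
  exists (mk (a - 1) 1 c 0); split => //.
  apply: conj_eq => //.
  rewrite /Um !mk_mul; apply: mk_eq; try ring.
  apply: (lin1 (k := -1) _ hdet); ring.
Qed.

Lemma gammaC_1 {R : realType} (Y : 'M[R[i]]_2) : Y \is a GRing.unit -> gammaC 1 Y = 0.
Proof. by move=> uY; rewrite /gammaC invr1 mul1r mulr1 mulrV // mk1 mk_tr subrr. Qed.

Lemma det_conj {R : realType} (P X : 'M[R[i]]_2) : P \is a GRing.unit ->
  \det (P^-1 * X * P) = \det X.
Proof.
move=> uP; rewrite -!mulmxE !det_mulmx mulrC mulrA -det_mulmx mulmxE mulrV //.
by rewrite det1 mul1r.
Qed.



Lemma lin3 {R : realType} (k1 k2 k3 E F G1 H1 G2 H2 G3 H3 : R[i]) :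
  E - F = k1 * (G1 - H1) + k2 * (G2 - H2) + k3 * (G3 - H3) ->
  G1 = H1 -> G2 = H2 -> G3 = H3 -> E = F.
Proof.
by move=> h e1 e2 e3; apply/eqP; rewrite -subr_eq0 h e1 e2 e3 !subrr !mulr0 !addr0.
Qed.


Lemma N2 {R : realType} (a b c : R[i]) : a * (- a) - b * c = 1 -> c != 0 ->
  exists T, T \is a GRing.unit /\ T^-1 * Um * T = Um /\ T^-1 * mk a b c (- a) * T = Yc c.
Proof.
move=> hdet c0.
have [s hs] : exists s : R[i], s * c = a - iC by exists ((a - iC) / c); rewrite mulfVK.
have uT : mk 1 s 0 1 \is a GRing.unit.
  by apply: unit_det; rewrite mk_det mulr1 mulr0 subr0 oner_neq0.
exists (mk 1 s 0 1); split => //; split; apply: conj_eq => //.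
  by rewrite /Um !mk_mul; apply: mk_eq; rewrite ?(mul0r, mulr0, mul1r, mulr1, add0r, addr0) // addrC.
rewrite /Yc !mk_mul; apply: mk_eq.
- apply: (lin1 (k := -1) _ hs); ring.
- apply: (mulfI c0).
  apply: (lin3 (k1 := a + iC) (k2 := -1) (k3 := -1) _ hs hdet ii); ring.
- ring.
- apply: (lin1 (k := 1) _ hs); ring.
Qed.

Lemma det_opp {R : realType} (X : 'M[R[i]]_2) : \det (- X) = \det X.
Proof. by rewrite [X]mkE mk_opp !mk_det; ring. Qed.

Lemma tr_opp {R : realType} (X : 'M[R[i]]_2) : \tr (- X) = - \tr X.
Proof. exact: raddfN. Qed.

Lemma conj_sg {R : realType} (T Z : 'M[R[i]]_2) b :
  T^-1 * sg b Z * T = sg b (T^-1 * Z * T).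
Proof. by case: b; rewrite /sg ?mulrN ?mulNr. Qed.

Lemma tr_pm2 {R : realType} (X : 'M[R[i]]_2) : betaC X = 0 -> \tr X = 2 \/ \tr X = -2.
Proof.
rewrite /betaC => h.
have : (\tr X - 2) * (\tr X + 2) = 0 by rewrite -h; ring.
move/eqP; rewrite mulf_eq0 => /orP [/eqP h1|/eqP h1]; [left|right].
- by apply: (lin1 (k := 1) _ h1); ring.
- by apply: (lin1 (k := 1) _ h1); ring.
Qed.

Lemma tr_0 {R : realType} (Y : 'M[R[i]]_2) : betaC Y = -4 -> \tr Y = 0.
Proof.
rewrite /betaC => h.
have : (\tr Y) ^+ 2 = 0 by apply: (lin1 (k := 1) _ h); ring.
by move/eqP; rewrite expf_eq0 /= => /eqP.
Qed.

Lemma NF {R : realType} (X Y : 'M[R[i]]_2) : \det X = 1 -> betaC X = 0 ->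
  X <> 1 -> X <> -1 -> \det Y = 1 -> betaC Y = -4 -> gammaC X Y != 0 ->
  exists P b c, P \is a GRing.unit /\ c ^+ 2 = gammaC X Y /\
    P^-1 * X * P = sg b Um /\ P^-1 * Y * P = Yc c.
Proof.
move=> dX bX nX1 nX2 dY bY g0.
have uX := unit_det1 dX; have uY := unit_det1 dY.
have [Q [b [uQ hQ]]] : exists Q b, Q \is a GRing.unit /\ Q^-1 * X * Q = sg b Um.
  case: (tr_pm2 bX) => ht.
  - by have [Q [uQ hQ]] := NF1 dX ht nX1; exists Q, false.
  - have [Q [uQ hQ]] : exists Q, Q \is a GRing.unit /\ Q^-1 * (- X) * Q = Um.
      apply: NF1; first by rewrite det_opp.
        by rewrite tr_opp ht opprK.
      by move=> e; apply: nX2; rewrite -e opprK.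
    exists Q, true; split => //; rewrite /sg -hQ mulrN mulNr opprK //.
have dY' : \det (Q^-1 * Y * Q) = 1 by rewrite det_conj.
have tY' : \tr (Q^-1 * Y * Q) = 0 by rewrite tr_conj // tr_0.
have hg : gammaC X Y = gammaC (sg b Um) (Q^-1 * Y * Q).
  by rewrite -hQ gammaC_conj.
have eY := mkE (Q^-1 * Y * Q).
set a := (Q^-1 * Y * Q) 0 0 in eY. set b' := (Q^-1 * Y * Q) 0 1 in eY.
set c := (Q^-1 * Y * Q) 1 0 in eY. set d := (Q^-1 * Y * Q) 1 1 in eY.
clearbody a b' c d.
rewrite eY mk_det in dY'; rewrite eY mk_tr in tY'; rewrite eY in hg.
rename dY' into hd; rename tY' into ht.
have ed : d = - a by apply: (lin1 (k := 1) _ ht); ring.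
subst d.
have gU : gammaC X Y = c ^+ 2.
  rewrite hg; case: (b); rewrite /sg ?gammaC_oppl; exact: gammaC_U.
have c0 : c != 0 by apply: contraNneq g0 => e; rewrite gU e expr0n.
have [T [uT [hT1 hT2]]] := N2 hd c0.
exists (Q * T), b, c; split; first by rewrite unitrMl.
split; first by [].
rewrite invrM //.
have e1 : forall Z, T^-1 * Q^-1 * Z * (Q * T) = T^-1 * (Q^-1 * Z * Q) * T.
  by move=> Z; rewrite !mulrA.
rewrite !e1 hQ conj_sg hT1 eY; split => //.
Qed.



Definition goodp {R : realType} (X Y : 'M[R[i]]_2) :=
  \det X = 1 /\ betaC X = 0 /\ \det Y = 1 /\ betaC Y = -4.

Lemma unitUm {R : realType} : (@Um R) \is a GRing.unit.
Proof. exact: unit_det1 det_Um. Qed.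

Lemma unitYc {R : realType} (c : R[i]) : Yc c \is a GRing.unit.
Proof. exact: unit_det1 (det_Yc c). Qed.

Lemma flip {R : realType} (c : R[i]) : c != 0 ->
  discrete_rep Um (Yc c) -> discrete_rep Um (Yc (- c)).
Proof.
move=> c0 d.
have d1 := disc_sg false true unitUm (unitYc c) d; rewrite /sg in d1.
have e : - Yc c = mk (- iC) 0 (- c) (- (- iC)) by rewrite /Yc mk_opp oppr0.
rewrite e in d1.
have hd : (- iC) * (- (- iC)) - 0 * (- c) = 1 :> R[i].
  by rewrite mul0r subr0 opprK; apply: (lin1 (k := -1) _ ii); ring.
have hc : - c != 0 by rewrite oppr_eq0.
have [T [uT [h1 h2]]] := N2 hd hc.
have d2 := disc_conj false false unitUm _ uT d1.
rewrite /sg h1 h2 in d2; apply: d2.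
by rewrite -e unitrN unitYc.
Qed.

Lemma flip2 {R : realType} (c c' : R[i]) : c != 0 -> c' ^+ 2 = c ^+ 2 ->
  discrete_rep Um (Yc c) -> discrete_rep Um (Yc c').
Proof.
move=> c0 e d.
have : (c' - c) * (c' + c) = 0 by apply: (lin1 (k := 1) _ e); ring.
move/eqP; rewrite mulf_eq0 => /orP [/eqP h|/eqP h].
- have -> : c' = c by apply: (lin1 (k := 1) _ h); ring.
  exact: d.
- have -> : c' = - c by apply: (lin1 (k := 1) _ h); ring.
  exact: flip.
Qed.

Lemma gammaC_N1 {R : realType} (Y : 'M[R[i]]_2) : Y \is a GRing.unit -> gammaC (-1) Y = 0.
Proof. by move=> uY; rewrite gammaC_oppl gammaC_1. Qed.

Lemma conj_back {R : realType} (P X : 'M[R[i]]_2) : P \is a GRing.unit ->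
  P * (P^-1 * X * P) / P = X.
Proof. by move=> uP; rewrite mulrA mulrK // mulrA mulrV // mul1r. Qed.

Lemma to_normal {R : realType} (X Y : 'M[R[i]]_2) (c : R[i]) :
  goodp X Y -> gammaC X Y != 0 -> c ^+ 2 = gammaC X Y ->
  (discrete_rep X Y <-> discrete_rep Um (Yc c)).
Proof.
move=> [dX [bX [dY bY]]] g0 hc.
have uX := unit_det1 dX; have uY := unit_det1 dY.
have n1 : X <> 1 by move=> e; move: g0; rewrite e gammaC_1 // eqxx.
have n2 : X <> -1 by move=> e; move: g0; rewrite e gammaC_N1 // eqxx.
have [P [b [c0 [uP [hc0 [hX hY]]]]]] := NF dX bX n1 n2 dY bY g0.
have cn0 : c != 0 by apply: contraNneq g0 => e; rewrite -hc e expr0n.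
have c0n0 : c0 != 0 by apply: contraNneq g0 => e; rewrite -hc0 e expr0n.
split.
- move=> d.
  have d1 := disc_conj false false uX uY uP d; rewrite /sg hX hY in d1.
  have d2 := disc_sg b false (sg_unit b unitUm) (unitYc c0) d1.
  rewrite sg_sg /sg in d2.
  apply: flip2 c0n0 _ d2; by rewrite hc0 hc.
- move=> d.
  have d1 : discrete_rep Um (Yc c0) by apply: flip2 cn0 _ d; rewrite hc0 hc.
  have d2 := disc_sg b false unitUm (unitYc c0) d1.
  have uP' : P^-1 \is a GRing.unit by rewrite unitrV.
  have d3 := disc_conj false false (sg_unit b unitUm) (unitYc c0) uP' d2.
  rewrite /= -hX -hY invrK in d3; rewrite /sg in d3.
  by rewrite !conj_back in d3.
Qed.

Lemma classif {R : realType} (X Y X' Y' : 'M[R[i]]_2) :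
  goodp X Y -> goodp X' Y' -> gammaC X Y = gammaC X' Y' -> gammaC X Y != 0 ->
  discrete_rep X Y -> discrete_rep X' Y'.
Proof.
move=> g g' e n d.
have hc := sqr_sqrtc (gammaC X Y).
apply/(to_normal (c := sqrtc (gammaC X Y)) g'); first by rewrite -e.
  by rewrite -e.
exact/(to_normal g n hc).
Qed.



Lemma det_invM {R : realType} (X : 'M[R[i]]_2) : \det X = 1 -> \det X^-1 = 1.
Proof. by move=> h; rewrite [X^-1]/= det_inv h invr1. Qed.

Lemma det_mulM {R : realType} (X Y : 'M[R[i]]_2) : \det (X * Y) = \det X * \det Y.
Proof. by rewrite -mulmxE det_mulmx. Qed.

Lemma gen2_det1 {R : realType} (A B g : 'M[R[i]]_2) : \det A = 1 -> \det B = 1 ->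
  gen2 A B g -> \det g = 1.
Proof.
move=> dA dB; elim => //.
- by rewrite det1.
- by move=> x _ hx; rewrite det_invM.
- by move=> x y _ hx _ hy; rewrite det_mulM hx hy mulr1.
Qed.

Lemma sep {R : realType} (X Y : 'M[R[i]]_2) : X <> Y ->
  exists d : R, 0 < d /\ ~ nearR X Y d.
Proof.
move=> hXY.
case: (boolP [forall i, [forall j, X i j == Y i j]]) => H.
  by exfalso; apply: hXY; apply/matrixP => i j; move/forallP: H => /(_ i) /forallP /(_ j) /eqP.
move/forallPn: H => [i /forallPn [j hij]].
exists (normc (X i j - Y i j)); split.
  rewrite lt_def nge0 andbT; apply/eqP => e; move/eqP: hij; apply.
  by apply/eqP; rewrite -subr_eq0; apply/eqP; apply: eq0_normc.
by move=> h; have := h i j; rewrite ltxx.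
Qed.

Lemma nearR_mono {R : realType} (X Y : 'M[R[i]]_2) r r' : nearR X Y r -> r <= r' -> nearR X Y r'.
Proof. by move=> h hr i j; apply: lt_le_trans (h i j) hr. Qed.

Lemma bnd_add {R : realType} (X Y : 'M[R[i]]_2) a b : bnd X a -> bnd Y b -> bnd (X + Y) (a + b).
Proof.
move=> hX hY i j; rewrite mxE; apply: le_trans (le_normcD _ _) _.
by apply: lerD.
Qed.

Lemma bnd_S {R : realType} (S E : 'M[R[i]]_2) a : (S = 1 \/ S = -1) -> bnd E a ->
  bnd (S * E) a /\ bnd (E * S) a.
Proof.
move=> [] -> h; rewrite ?mul1r ?mulr1 ?mulN1r ?mulrN1; split => // i j;
  by rewrite mxE normcN.
Qed.

Lemma inv_near {R : realType} (X S : 'M[R[i]]_2) r : \det X = 1 -> (S = 1 \/ S = -1) ->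
  nearR X S r -> bnd (X^-1 - S) r.
Proof.
move=> dX hS hn.
have hb := nearR_bnd hn.
have eX : X^-1 = mk (X 1 1) (- X 0 1) (- X 1 0) (X 0 0).
  by rewrite {1}[X]mkE mk_inv // -mk_det -mkE.
have [s eS] : exists s : R[i], S = mk s 0 0 s.
  by case: hS => ->; [exists 1; rewrite mk1 | exists (-1); rewrite mkN1].
rewrite eX eS mk_opp mk_add; rewrite eS in hb => i j.
have h00 := hb 0 0; have h01 := hb 0 1; have h10 := hb 1 0; have h11 := hb 1 1.
rewrite !mxE /= ?subr0 in h00 h01 h10 h11.
case: (ord2P i) => ->; case: (ord2P j) => ->; rewrite !mxE /= ?oppr0 ?addr0 ?normcN //.
Qed.

Lemma expand4 {R : realType} (A B S T : 'M[R[i]]_2) :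
  A * B - S * T = (A - S) * (B - T) + S * (B - T) + (A - S) * T.
Proof.
rewrite mulrBl !mulrBr mulrBl.
by rewrite subrK addrA subrK.
Qed.

Lemma prod_near {R : realType} (X Y S1 S2 : 'M[R[i]]_2) r : \det X = 1 ->
  (S1 = 1 \/ S1 = -1) -> (S2 = 1 \/ S2 = -1) -> 0 <= r -> r <= 1 ->
  nearR X S1 r -> nearR Y S2 r -> bnd (X^-1 * Y - S1 * S2) (4 * r).
Proof.
move=> dX h1 h2 r0 r1 n1 n2.
have b1 := inv_near dX h1 n1.
have b2 := nearR_bnd n2.
rewrite (expand4 (X^-1) Y S1 S2).
apply: (bnd_mono (a := 2 * r * r + r + r)); last by nra.
have [c1 _] := bnd_S h1 b2.
have [_ c2] := bnd_S h2 b1.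
apply: bnd_add; last exact: c2.
apply: bnd_add; last exact: c1.
exact: bnd_mul.
Qed.



Lemma sgn_mul {R : realType} (S1 S2 : 'M[R[i]]_2) : (S1 = 1 \/ S1 = -1) -> (S2 = 1 \/ S2 = -1) ->
  S1 * S2 = 1 \/ S1 * S2 = -1.
Proof.
by case=> ->; case=> ->; rewrite ?mul1r ?mulr1 ?mulN1r ?opprK; auto.
Qed.

Lemma isol_of {R : realType} (G : 'M[R[i]]_2 -> Prop) r :
  (forall g S, G g -> g <> 1 -> g <> -1 -> (S = 1 \/ S = -1) -> ~ nearR g S r) -> isol G r.
Proof. by move=> H g hg h1 h2; split; apply: H; auto. Qed.


Lemma lemmaH {R : realType} (w : 'M[R[i]]_2) : \det w = 1 -> w 1 0 != 0 ->
  discrete_rep Um w ->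
  exists psi, \det psi = 1 /\ \tr psi = 0 /\ psi 1 0 = - iC * w 1 0 /\ discrete_rep Um psi.
Proof.
move=> dw z0 dsc.
have uw := unit_det1 dw.
have [x [y [z [t eW]]]] : exists x y z t : R[i], w = mk x y z t.
  by exists (w 0 0), (w 0 1), (w 1 0), (w 1 1); exact: mkE.
have ez : w 1 0 = z by rewrite eW mk10.
rewrite ez in z0 *.
have [s hs] : exists s : R[i], s * z = iC * (t - x) by exists (iC * (t - x) / z); rewrite mulfVK.
set h := mk iC s 0 (- iC).
have dh : \det h = 1 by rewrite /h mk_det; apply: (lin1 (k := -1) _ ii); ring.
have th : \tr h = 0 by rewrite /h mk_tr subrr.
have hh : h * h = -1 by apply: sq_tr0.
have uh := unit_det1 dh.
have hinv : h^-1 = - h.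
  by apply: inv_eqM; rewrite ?mulrN ?mulNr hh opprK.
set psi := h * w.
have dpsi : \det psi = 1 by rewrite /psi det_mulM dh dw mulr1.
have tpsi : \tr psi = 0.
  rewrite /psi eW /h mk_mul mk_tr; apply: (lin1 (k := 1) _ hs); ring.
have psi10 : psi 1 0 = - iC * z by rewrite /psi eW /h mk_mul mk10; ring.
have uU : (@Um R) \is a GRing.unit := unitUm.
have hU : h^-1 * Um * h = Um^-1.
  rewrite hinv /h /Um mk_inv; last by rewrite mulr1 mulr0 subr0.
  rewrite mk_opp !mk_mul; apply: mk_eq.
  - apply: (lin1 (k := -1) _ ii); ring.
  - apply: (lin1 (k := 1) _ ii); ring.
  - ring.
  - apply: (lin1 (k := -1) _ ii); ring.
have hW : h^-1 * w * h = w^-1.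
  have hpp : psi * psi = -1 by apply: sq_tr0.
  have e1 : h * w * h = - w^-1.
    have -> : h * w * h = (psi * psi) * w^-1 by rewrite /psi !mulrA mulrK.
    by rewrite hpp mulN1r.
  by rewrite hinv !mulNr e1 opprK.
pose Gpm g := gen2 Um w g \/ gen2 Um w (- g).
have GN : forall g, Gpm g -> Gpm (- g) by move=> g [] H; [right; rewrite opprK | left].
have Ginv : forall g, Gpm g -> Gpm g^-1.
  by move=> g [] H; [left; constructor | right; rewrite -invrN; constructor].
have Gmul : forall g1 g2, Gpm g1 -> Gpm g2 -> Gpm (g1 * g2).
  move=> g1 g2 [] H1 [] H2.
  - by left; constructor.
  - by right; rewrite -mulrN; constructor.
  - by right; rewrite -mulNr; constructor.
  - by left; rewrite -mulrNN; constructor.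
have Gdet : forall g, Gpm g -> \det g = 1.
  move=> g [] H; first exact: gen2_det1 det_Um dw H.
  by rewrite -det_opp; exact: gen2_det1 det_Um dw H.
have Gconj0 : forall g, gen2 Um w g -> Gpm (h^-1 * g * h).
  move=> g; elim.
  - by rewrite conj1 //; left; constructor.
  - by rewrite hU; left; do 2 constructor.
  - by rewrite hW; left; do 2 constructor.
  - move=> g0 hg0 IH; rewrite -inv_conj //; first exact: Ginv.
    exact: gen2_unit uU uw hg0.
  - move=> g1 g2 _ IH1 _ IH2; rewrite -conj_mul //; exact: Gmul.
have Gconj : forall g, Gpm g -> Gpm (h^-1 * g * h).
  move=> g [] H; first exact: Gconj0.
  by have := Gconj0 _ H; rewrite mulrN mulNr => /GN; rewrite opprK.
pose Sset g := exists g0, Gpm g0 /\ (g = g0 \/ g = h * g0).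
have Sgen : forall g, gen2 Um psi g -> Sset g.
  move=> g; elim.
  - by exists 1; split; [left; constructor | left].
  - by exists Um; split; [left; constructor | left].
  - by exists w; split; [left; constructor | right].
  - move=> g0 _ [g1 [G1 [-> | ->]]].
    + by exists g1^-1; split; [exact: Ginv | left].
    + exists (- (h^-1 * g1^-1 * h)); split; first by apply/GN/Gconj/Ginv.
      right; have ug1 := unit_det1 (Gdet _ G1).
      by rewrite invrM // hinv mulrN !mulNr opprK !mulrA hh mulN1r mulNr.
  - move=> g1 g2 _ [a1 [A1 [-> | ->]]] _ [a2 [A2 [-> | ->]]].
    + by exists (a1 * a2); split; [exact: Gmul | left].
    + exists ((h^-1 * a1 * h) * a2); split; first by apply: Gmul => //; exact: Gconj.
      by right; rewrite !mulrA mulrV // mul1r.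
    + by exists (a1 * a2); split; [exact: Gmul | right; rewrite mulrA].
    + exists (- ((h^-1 * a1 * h) * a2)); split; first by apply/GN/Gmul => //; exact: Gconj.
      left; rewrite hinv -mulNr !mulNr opprK !mulrA //.
exists psi; split => //; split => //; split => //.
move/disc_isol: dsc => [r0 [hr0 H0]].
have GI : forall g S, Gpm g -> g <> 1 -> g <> -1 -> (S = 1 \/ S = -1) -> ~ nearR g S r0.
  move=> g S [] Hg h1 h2 hS; first exact: (isol_S H0 Hg h1 h2 hS).
  move=> hn; have hn' := nearR_opp (X := - g) (Y := S) (r := r0).
  rewrite opprK in hn'; have := hn' hn.
  apply: (isol_S H0 Hg); [by move=> e; apply: h2; rewrite -[g]opprK e
                         | by move=> e; apply: h1; rewrite -[g]opprK e opprK
                         | exact: sgn_cases].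
set r1 := r0 / (8 * (1 + r0)).
have hr1e : r1 * (8 * (1 + r0)) = r0 by rewrite /r1 mulfVK // lt0r_neq0 //; lra.
have r1p : 0 < r1 by rewrite /r1 divr_gt0 //; lra.
have r1le1 : r1 <= 1 by nra.
have r14 : 4 * r1 < r0 by nra.
have r1r0 : r1 <= r0 by nra.
have KL : forall g1 g0 S1 S, Gpm g1 -> Gpm g0 -> (S1 = 1 \/ S1 = -1) -> (S = 1 \/ S = -1) ->
    nearR (h * g1) S1 r1 -> nearR (h * g0) S r1 -> g0 = g1 \/ g0 = - g1.
  move=> g1 g0 S1 S G1 G0 hS1 hS n1 n0.
  have ug1 := unit_det1 (Gdet _ G1).
  have d1 : \det (h * g1) = 1 by rewrite det_mulM dh Gdet // mulr1.
  have b := prod_near d1 hS1 hS (ltW r1p) r1le1 n1 n0.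
  have e : (h * g1)^-1 * (h * g0) = g1^-1 * g0.
    by rewrite invrM // -mulrA mulKr.
  rewrite e in b.
  have nb := bnd_nearR b r14.
  have Gq : Gpm (g1^-1 * g0) by apply: Gmul => //; exact: Ginv.
  have [q1|q1] := classic (g1^-1 * g0 = 1).
    by left; rewrite -[g0](mulVKr ug1) q1 mulr1.
  have [q2|q2] := classic (g1^-1 * g0 = -1).
    by right; rewrite -[g0](mulVKr ug1) q2 mulrN1.
  by exfalso; apply: (GI _ _ Gq q1 q2 (sgn_mul hS1 hS)).
apply/disc_isol.
have [[g1 [G1 [n1 [n2 [S1 [hS1 hn1]]]]]]|nobad] :=
  classic (exists g1, Gpm g1 /\ h * g1 <> 1 /\ h * g1 <> -1 /\
     exists S1, (S1 = 1 \/ S1 = -1) /\ nearR (h * g1) S1 r1).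
- have [d1 [d1p nd1]] := sep n1.
  have [d2 [d2p nd2]] := sep n2.
  set e := Order.min r1 (Order.min d1 d2).
  have ep : 0 < e by rewrite /e !lt_min r1p d1p d2p.
  have e1 : e <= r1 by rewrite /e ge_min lexx.
  have e2 : e <= d1 by rewrite /e !ge_min lexx orbT.
  have e3 : e <= d2 by rewrite /e !ge_min lexx !orbT.
  exists e; split => //; apply: isol_of => g S hg g1n g2n hS hn.
  have [g0 [G0 [eg|eg]]] := Sgen _ hg; subst g.
    by apply: (GI _ _ G0 g1n g2n hS); apply: nearR_mono hn _; lra.
  have [q|q] := KL g1 g0 S1 S G1 G0 hS1 hS hn1 (nearR_mono hn e1); subst g0.
    by case: hS => ?; subst S; [apply: nd1 | apply: nd2]; apply: nearR_mono hn _.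
  rewrite mulrN in hn; have hn' := nearR_opp hn.
  by case: hS => ?; subst S; [apply: nd2 | apply: nd1; rewrite -[1]opprK];
     apply: nearR_mono hn' _.
- exists r1; split => //; apply: isol_of => g S hg g1n g2n hS hn.
  have [g0 [G0 [eg|eg]]] := Sgen _ hg; subst g.
    by apply: (GI _ _ G0 g1n g2n hS); apply: nearR_mono hn _.
  by apply: nobad; exists g0; split => //; split => //; split => //; exists S.
Qed.



Definition Tn {R : realType} (n : int) : 'M[R[i]]_2 := mk 1 (n%:~R) 0 1.

Lemma normc_real {R : realType} (x : R) : normc (x%:C) = `|x|.
Proof. by rewrite /normc /= expr0n /= addr0 sqrtr_sqr. Qed.

Lemma normc_int {R : realType} (n : int) : n != 0 -> 1 <= normc (n%:~R : R[i]).
Proof.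
move=> n0.
have -> : (n%:~R : R[i]) = (n%:~R : R)%:C by rewrite rmorph_int.
rewrite normc_real -intr_norm ler1z.
by rewrite -gtz0_ge1 normr_gt0.
Qed.

Lemma normc_2 {R : realType} (s : R[i]) : (s = 1 \/ s = -1) -> normc (s + s) = 2.
Proof.
move=> hs; rewrite -mulr2n normcMn.
by case: hs => ->; rewrite ?normcN normc1.
Qed.

Lemma aux_tr {R : realType} (a d s : R[i]) : a + d = 0 -> s + s = - ((a - s) + (d - s)).
Proof. by move=> h; apply: (lin1 (k := 1) _ h); ring. Qed.

Lemma disc_crit {R : realType} (A B : 'M[R[i]]_2) :
  (forall g, gen2 A B g -> (exists b n, g = sg b (Tn n)) \/ \tr g = 0) -> discrete_rep A B.
Proof.
move=> H; apply/disc_isol; exists 1; split => //; apply: isol_of => g S hg h1 h2 hS hn.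
have [s [hs eS]] : exists s : R[i], (s = 1 \/ s = -1) /\ S = mk s 0 0 s.
  by case: hS => ->; [exists 1; rewrite mk1 | exists (-1); rewrite mkN1]; split; auto.
rewrite eS in hn.
case: (H g hg) => [[b [n eg]] | tg].
- have n0 : n != 0.
    apply/eqP => n0; subst n; case: b eg => /= eg.
    + by apply: h2; rewrite eg /Tn mulr0z -mk1.
    + by apply: h1; rewrite eg /Tn mulr0z -mk1.
  have := hn 0 1; rewrite eg /Tn !mxE /= subr0.
  case: b {eg} => /=; rewrite ?mxE /= ?normcN => h; have := normc_int (R := R) n0; lra.
- have h00 := hn 0 0; have h11 := hn 1 1.
  rewrite !mxE /= in h00 h11.
  move: tg; rewrite [g]mkE mk_tr => tg.
  have e : s + s = - ((g 0 0 - s) + (g 1 1 - s)).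
    exact: aux_tr tg.
  have := le_normcD (g 0 0 - s) (g 1 1 - s).
  rewrite -normcN -e normc_2 //; lra.
Qed.



Lemma NF0 {R : realType} (X : 'M[R[i]]_2) : \det X = 1 -> betaC X = 0 ->
  X <> 1 -> X <> -1 -> exists Q b, Q \is a GRing.unit /\ Q^-1 * X * Q = sg b Um.
Proof.
move=> dX bX nX1 nX2.
case: (tr_pm2 bX) => ht.
- by have [Q [uQ hQ]] := NF1 dX ht nX1; exists Q, false.
- have [Q [uQ hQ]] : exists Q, Q \is a GRing.unit /\ Q^-1 * (- X) * Q = Um.
    apply: NF1; first by rewrite det_opp.
      by rewrite tr_opp ht opprK.
    by move=> e; apply: nX2; rewrite -e opprK.
  exists Q, true; split => //; rewrite /sg -hQ mulrN mulNr opprK //.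
Qed.

Lemma sg_neg {R : realType} b (M : 'M[R[i]]_2) : sg b (- M) = sg (~~ b) M.
Proof. by case: b; rewrite /sg ?opprK. Qed.

Lemma tr_sg {R : realType} b (M : 'M[R[i]]_2) : \tr M = 0 -> \tr (sg b M) = 0.
Proof. by case: b; rewrite /sg ?tr_opp => ->; rewrite ?oppr0. Qed.

Lemma T_add {R : realType} (n m : int) : Tn n * Tn m = Tn (n + m) :> 'M[R[i]]_2.
Proof. by rewrite /Tn mk_mul intrD; apply: mk_eq; ring. Qed.

Lemma T0 {R : realType} : Tn 0 = 1 :> 'M[R[i]]_2.
Proof. by rewrite /Tn mulr0z mk1. Qed.

Lemma T1 {R : realType} : Tn 1 = Um :> 'M[R[i]]_2.
Proof. by rewrite /Tn /Um. Qed.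

Lemma T_inv {R : realType} (n : int) : (Tn n)^-1 = Tn (- n) :> 'M[R[i]]_2.
Proof. by apply: inv_eqM; rewrite T_add ?subrr ?addNr T0. Qed.

Lemma red_upper {R : realType} (a b' : R[i]) bb : a * (- a) = 1 ->
  discrete_rep (sg bb Um) (mk a b' 0 (- a)).
Proof.
move=> ha.
set Y0 := mk a b' 0 (- a).
have dY : \det Y0 = 1 by rewrite /Y0 mk_det mulr0 subr0.
have tY : \tr Y0 = 0 by rewrite /Y0 mk_tr subrr.
have YY : Y0 * Y0 = -1 by apply: sq_tr0.
have YT : forall n, Y0 * Tn n = Tn (- n) * Y0.
  by move=> n; rewrite /Y0 /Tn !mk_mul intrN; apply: mk_eq; ring.
have TYinv : forall n, (Tn n * Y0)^-1 = - (Tn n * Y0).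
  move=> n.
  have sq : (Tn n * Y0) * (Tn n * Y0) = -1.
    rewrite mulrA -[Tn n * Y0 * Tn n]mulrA YT mulrA T_add subrr T0 mul1r //.
  by apply: inv_eqM; rewrite ?mulrN ?mulNr sq opprK.
pose Sr g := exists c n, g = sg c (Tn n) \/ g = sg c (Tn n * Y0).
have Sg : forall g, gen2 (sg bb Um) Y0 g -> Sr g.
  move=> g; elim.
  - by exists false, 0; left; rewrite T0.
  - by exists bb, 1; left; rewrite T1.
  - by exists false, 0; right; rewrite T0 mul1r.
  - move=> x _ [c [n [-> | ->]]]; rewrite sg_inv.
    + by exists c, (- n); left; rewrite T_inv.
    + by exists (~~ c), n; right; rewrite TYinv sg_neg.
  - move=> x y _ [c1 [n1 [-> | ->]]] _ [c2 [n2 [-> | ->]]]; rewrite sg_mul.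
    + by exists (c1 (+) c2), (n1 + n2); left; rewrite T_add.
    + by exists (c1 (+) c2), (n1 + n2); right; rewrite mulrA T_add.
    + exists (c1 (+) c2), (n1 - n2); right.
      by rewrite -mulrA YT mulrA T_add.
    + exists (~~ (c1 (+) c2)), (n1 - n2); left.
      rewrite -sg_neg; congr sg.
      by rewrite mulrA -[Tn n1 * Y0 * Tn n2]mulrA YT mulrA T_add -mulrA YY mulrN1.
apply: disc_crit => g hg.
have [c [n [eg|eg]]] := Sg g hg; first by left; exists c, n.
right; rewrite eg; apply: tr_sg.
by rewrite /Y0 /Tn mk_mul mk_tr; ring.
Qed.

Lemma red_pm1 {R : realType} (Y : 'M[R[i]]_2) bb : \det Y = 1 -> \tr Y = 0 ->
  discrete_rep (sg bb 1) Y.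
Proof.
move=> dY tY.
have YY : Y * Y = -1 by apply: sq_tr0.
have Yinv : Y^-1 = - Y by apply: inv_eqM; rewrite ?mulrN ?mulNr YY opprK.
pose Sr g := exists c, g = sg c 1 \/ g = sg c Y.
have Sg : forall g, gen2 (sg bb 1) Y g -> Sr g.
  move=> g; elim.
  - by exists false; left.
  - by exists bb; left.
  - by exists false; right.
  - move=> x _ [c [-> | ->]]; rewrite sg_inv.
    + by exists c; left; rewrite invr1.
    + by exists (~~ c); right; rewrite Yinv sg_neg.
  - move=> x y _ [c1 [-> | ->]] _ [c2 [-> | ->]]; rewrite sg_mul.
    + by exists (c1 (+) c2); left; rewrite mulr1.
    + by exists (c1 (+) c2); right; rewrite mul1r.
    + by exists (c1 (+) c2); right; rewrite mulr1.
    + by exists (~~ (c1 (+) c2)); left; rewrite YY -sg_neg.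
apply: disc_crit => g hg.
have [c [eg|eg]] := Sg g hg; first by left; exists c, 0; rewrite T0.
by right; rewrite eg; apply: tr_sg.
Qed.

Lemma reducible {R : realType} (X Y : 'M[R[i]]_2) :
  goodp X Y -> gammaC X Y = 0 -> discrete_rep X Y.
Proof.
move=> [dX [bX [dY bY]]] g0.
have tY := tr_0 bY.
have [e1|n1] := eqVneq X 1; first by have := red_pm1 false dY tY; rewrite e1.
have [e2|n2] := eqVneq X (-1); first by have := red_pm1 true dY tY; rewrite e2.
have [Q [b [uQ hQ]]] := NF0 dX bX (fun e => (negP n1) (introT eqP e))
  (fun e => (negP n2) (introT eqP e)).
have uX := unit_det1 dX; have uY := unit_det1 dY.
have dY' : \det (Q^-1 * Y * Q) = 1 by rewrite det_conj.
have tY' : \tr (Q^-1 * Y * Q) = 0 by rewrite tr_conj.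
have hg : gammaC X Y = gammaC (sg b Um) (Q^-1 * Y * Q).
  by rewrite -hQ gammaC_conj.
have eY := mkE (Q^-1 * Y * Q).
set a := (Q^-1 * Y * Q) 0 0 in eY. set b' := (Q^-1 * Y * Q) 0 1 in eY.
set c := (Q^-1 * Y * Q) 1 0 in eY. set d := (Q^-1 * Y * Q) 1 1 in eY.
clearbody a b' c d.
rewrite eY mk_det in dY'; rewrite eY mk_tr in tY'; rewrite eY in hg.
have ed : d = - a by apply: (lin1 (k := 1) _ tY'); ring.
subst d.
have gU : gammaC X Y = c ^+ 2.
  rewrite hg; case: (b); rewrite /sg ?gammaC_oppl; exact: gammaC_U.
have c0 : c = 0 by move/eqP: g0; rewrite gU expf_eq0 /= => /eqP.
subst c.
have ha : a * (- a) = 1 by rewrite -dY' mulr0 subr0.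
have d1 := red_upper b' b ha.
have uQ' : Q^-1 \is a GRing.unit by rewrite unitrV.
have uY0 : mk a b' 0 (- a) \is a GRing.unit.
  by apply: unit_det1; rewrite mk_det mulr0 subr0.
have d2 := disc_conj false false (sg_unit b unitUm) uY0 uQ' d1.
by rewrite -hQ -eY /sg invrK !conj_back in d2.
Qed.



Lemma gen2_pow {R : realType} (A B x : 'M[R[i]]_2) n : gen2 A B x -> gen2 A B (x ^+ n).
Proof.
move=> hx; elim: n => [|n IH]; first by rewrite expr0; constructor.
by rewrite exprS; constructor.
Qed.

Lemma gen2_powz {R : realType} (A B x : 'M[R[i]]_2) (m : int) : gen2 A B x -> gen2 A B (x ^ m).
Proof.
move=> hx; case: m => n /=; first exact: gen2_pow.
by constructor; apply: gen2_pow.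
Qed.

Lemma gen2_word {R : realType} (f phi : 'M[R[i]]_2) ms : gen2 f phi (word_eval f phi ms).
Proof.
elim: ms => [|m ms IH] /=; first by constructor.
case: ms IH => [|m' ms'] IH /=; first exact: (gen2_powz m (gen2_A f phi)).
apply: gen2_mul; last exact: IH.
apply: gen2_mul; last exact: gen2_B.
exact: (gen2_powz m (gen2_A f phi)).
Qed.

Lemma upper_gen {R : realType} (g : 'M[R[i]]_2) : gen2 Um (Yc 0) g -> g 1 0 = 0 /\ \det g = 1.
Proof.
elim.
- by split; [rewrite mk1 mk10 | rewrite mk1 mk_det; ring].
- by split; [rewrite /Um mk10 | exact: det_Um].
- by split; [rewrite /Yc mk10 | exact: det_Yc].
- move=> x _ [h1 h2]; split; last by rewrite det_invM.
  by move: h1 h2; rewrite [x]mkE mk_det mk10 => h1 h2; rewrite mk_inv // mk10 h1 oppr0.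
- move=> x y _ [h1 h2] _ [h3 h4]; split; last by rewrite det_mulM h2 h4 mulr1.
  by rewrite [x]mkE [y]mkE mk_mul mk10 h1 h3 mul0r mulr0 addr0.
Qed.

Lemma gammaC_Ug {R : realType} (g : 'M[R[i]]_2) : \det g = 1 -> gammaC Um g = (g 1 0) ^+ 2.
Proof. by move=> h; rewrite {1}(mkE g) gammaC_U // -mk_det -mkE. Qed.

Lemma parabolic_Um {R : realType} : parabolic (@Um R).
Proof.
split; first exact: det_Um.
split; first by rewrite tr_Um; ring.
have h : forall S : 'M[R[i]]_2, S 0 1 = 0 -> Um <> S.
  by move=> S hS e; move: hS; rewrite -e /Um mk01; apply/eqP; exact: oner_neq0.
split; apply: h; first by rewrite mk1 mk01.
by rewrite mkN1 mk01.
Qed.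

Lemma elliptic_Yc {R : realType} (c : R[i]) : elliptic2 (Yc c).
Proof. by split; [exact: det_Yc | exact: tr_Yc]. Qed.

Lemma iC_neq0 {R : realType} : (iC : R[i]) != 0.
Proof.
apply/eqP => e; have := @ii R; rewrite e mul0r => /eqP.
by rewrite eq_sym oppr_eq0 oner_eq0.
Qed.

Unset Implicit Arguments.

Theorem theorem8 (R : realType) (A B : 'M[R[i]]_2) (gamma : R[i])
    (ms : seq int) (p : {poly int}) :
  is_rep A B -> irreducible_rep A B ->
  principal_character A B = (gamma, 0, -4) ->
  good_word ms -> word_poly R ms p ->
  (exists A' B' : 'M[R[i]]_2,
      is_rep A' B' /\ principal_character A' B' = (peval p gamma, 0, -4)) /\
  (discrete_rep A B ->
   forall A' B' : 'M[R[i]]_2, is_rep A' B' ->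
     principal_character A' B' = (peval p gamma, 0, -4) ->
     discrete_rep A' B').
Proof.
move=> [dA dB] _ hch _ [_ wp].
move: hch; rewrite /principal_character => [[hg hbA hbB]].
split.
  exists Um, (Yc (sqrtc (peval p gamma))); split; first by split; [exact: det_Um | exact: det_Yc].
  rewrite /principal_character gammaC_Ug ?det_Yc // /Yc mk10 sqr_sqrtc.
  by rewrite /betaC tr_Um -/(Yc _) tr_Yc; congr (_, _, _); ring.
move=> dsc A' B' [dA' dB'] hch'.
move: hch'; rewrite /principal_character => [[hg' hbA' hbB']].
have g' : goodp A' B' by [].
have [z0|nz] := eqVneq (peval p gamma) 0.
  by apply: reducible => //; rewrite hg'.
have gn0 : gamma != 0.
  apply/eqP => g0; move/eqP: nz; apply.
  have e0 : gammaC Um (Yc 0) = 0 :> R[i] by rewrite gammaC_Ug ?det_Yc // /Yc mk10 expr0n.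
  have := wp Um (Yc 0) parabolic_Um (elliptic_Yc 0); rewrite e0 => e.
  rewrite g0 -e.
  have [h1 h2] := upper_gen (@gen2_word R Um (Yc 0) ms).
  rewrite gammaC_Ug; [by rewrite h1 expr0n | exact: h2].
set c := sqrtc gamma.
have hc : c ^+ 2 = gammaC A B by rewrite hg sqr_sqrtc.
have gAB : goodp A B by [].
have d1 : discrete_rep Um (Yc c).
  by apply/(to_normal gAB _ hc); rewrite ?hg.
set W := word_eval Um (Yc c) ms.
have hW : gen2 Um (Yc c) W := @gen2_word R Um (Yc c) ms.
have dW : \det W = 1 := gen2_det1 det_Um (det_Yc c) hW.
have d2 : discrete_rep Um W by apply: (disc_sub _ hW d1); constructor.
have gW : gammaC Um W = peval p gamma.
  rewrite (wp Um (Yc c) parabolic_Um (elliptic_Yc c)).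
  by rewrite gammaC_Ug ?det_Yc // /Yc mk10 sqr_sqrtc.
have W0 : W 1 0 != 0.
  by apply: contraNneq nz => e; rewrite -gW gammaC_Ug // e expr0n.
have [p1 [dp1 [tp1 [ep1 dsc1]]]] := lemmaH dW W0 d2.
have p10 : p1 1 0 != 0 by rewrite ep1 mulf_neq0 // oppr_eq0 iC_neq0.
have [p2 [dp2 [tp2 [ep2 dsc2]]]] := lemmaH dp1 p10 dsc1.
have gp2 : gammaC Um p2 = peval p gamma.
  rewrite gammaC_Ug // ep2 ep1 -gW gammaC_Ug //.
  by apply: (lin1 (k := (iC * iC - 1) * (W 1 0) ^+ 2) _ (@ii R)); ring.
apply: (classif (X := Um) (Y := p2)) => //.
- split; first exact: det_Um.
  split; first by rewrite /betaC tr_Um; ring.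
  by split => //; rewrite /betaC tp2 expr0n /= sub0r.
- by rewrite gp2 hg'.
- by rewrite gp2.
Qed.
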